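(* Assume (A1), (A2), (A3) and that $\{x^k\}_{k\in\mathbb N}$ is bounded. Then there exist $c_0>0$ and $k'\in\mathbb N$ such that for all $k\ge k'$, $$\operatorname{dist}(0,\partial_L\Phi(z^{k+1}))\le c_0\sum_{h=k-\tau-K}^{k}\|x^{h+1}-x^h\|\quad\text{and}\quad\operatorname{dist}(0,\partial_L\Psi(x^{k+1}))\le c_0\sum_{h=k-\tau-K}^{k}\|x^{h+1}-x^h\|,$$ where $x^i:=x^0$ for $i<0$.
   Context: Let $\mathcal H=\mathcal H_1\times\cdots\times\mathcal H_m$ be a product of finite-dimensional real Euclidean spaces with $\langle x,y\rangle=\sum_j\langle x_j,y_j\rangle$. For $x\in\mathcal H$, $x_{-j}$ denotes $x$ with its $j$th block removed and $(x_{-j};y)$ the point with $j$th block replaced by $y\in\mathcal H_j$. Let $f:\mathcal H\to\mathbb R$ be $C^1$, $r_j:\mathcal H_j\to(-\infty,\infty]$ proper lower semicontinuous, $r(x)=\sum_jr_j(x_j)$, $\Psi=f+r$ bounded below. $r$ is prox-bounded: there is $\lambda_r>0$ with $\operatorname{argmin}_y\{r(y)+\frac1{2\lambda}\|x-y\|^2\}\ne\emptyset$ for all $x$ and $0<\lambda\le\lambda_r$. For each $j$ there is $L_j:\mathcal H_{-j}\to(0,\infty)$ such that $y\mapsto\nabla_jf(x_{-j};y)$ is $L_j(x_{-j})$-Lipschitz for every $x$; $\nabla f$ is Lipschitz on every bounded set. $\partial_L$ is the limiting subdifferential and $\operatorname{dist}(0,S)=\inf_{s\in S}\|s\|$. Delays: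 an integer $\tau\ge1$ and $d_k\in\{0,\dots,\tau\}^m$; $x^{k-d_k}:=(x_1^{k-d_{k,1}},\dots,x_m^{k-d_{k,m}})$, with $x^i_j=x^0_j$ for $i\le0$. Deterministic Asynchronous PALM: choose $x^0$, $c\in(0,1)$, $M>0$, indices $j_k\in\{1,\dots,m\}$; let $\rho_\tau:=\sup_{j,k}|\{h:k-\tau\le h\le k,\ j_h=j\}|$. For each $k$ set $\gamma^k_j=\min\{c(L_j(x^{k-d_k}_{-j})+2M\sqrt{\rho_\tau\tau})^{-1},\lambda_r\}$, choose $x^{k+1}_{j_k}\in\operatorname{argmin}_{u\in\mathcal H_{j_k}}\{r_{j_k}(u)+\langle\nabla_{j_k}f(x^{k-d_k}),u-x^k_{j_k}\rangle+\frac1{2\gamma^k_{j_k}}\|u-x^k_{j_k}\|^2\}$, and $x^{k+1}_j=x^k_j$ for $j\ne j_k$. (A1): there is $K\in\mathbb N$ with $\{1,\dots,m\}\subseteq\{j_{k+1},\dots,j_{k+K}\}$ for all $k$. (A2): there is $L>0$ with $L_j(x^{k-d_k}_{-j})\le L$ for all $j,k$. (A3): $\|\nabla_{j_k}f(x^k)-\nabla_{j_k}f(x^{k-d_k})\|\le M\|x^k-x^{k-d_k}\|$ for all $k$. Lyapunov function $\Phi:\mathcal H^{1+\tau}\to(-\infty,\infty]$: $\Phi(x(0),\dots,x(\tau))=f(x(0))+r(x(0))+\frac{M\sqrt{\rho_\tau}}{2\sqrt\tau}\sum_{h=1}^\tau(\tau-h+1)\|x(h)-x(h-1)\|^2$,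 and $z^k:=(x^k,x^{k-1},\dots,x^{k-\tau})$ with $x^i:=x^0$ for $i<0$. *)

(* Defs.v *)
From Stdlib Require Import Reals.
From mathcomp Require Import ssreflect ssrfun ssrbool eqtype ssrnat seq choice fintype.
Set Implicit Arguments. Unset Strict Implicit. Unset Printing Implicit Defensive.
Local Open Scope R_scope.

Definition vec (T : finType) := T -> R.
Definition rsum (T : finType) (g : T -> R) : R := foldr Rplus 0 (map g (enum T)).
Definition inner (T : finType) (u v : vec T) : R := rsum (fun i => u i * v i).
Definition vnorm (T : finType) (u : vec T) : R := sqrt (inner u u).
Definition vsub (T : finType) (u v : vec T) : vec T := fun i => u i - v i.

(** Extended reals (-oo, +oo] : None stands for +oo. *)
Definition ER := option R.
Definition ER_le (a b : ER) : Prop :=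
  match a, b with
  | _, None => True
  | None, Some _ => False
  | Some x, Some y => x <= y
  end.
Definition ER_lt (a b : ER) : Prop :=
  match a, b with
  | None, _ => False
  | Some _, None => True
  | Some x, Some y => x < y
  end.
Definition ER_add (a b : ER) : ER :=
  match a, b with Some x, Some y => Some (x + y) | _, _ => None end.
Definition ER_addR (a : ER) (c : R) : ER :=
  match a with Some x => Some (x + c) | None => None end.

Definition proper_fun (T : finType) (g : vec T -> ER) : Prop := exists x, g x <> None.
Definition lsc (T : finType) (g : vec T -> ER) : Prop :=
  forall (x : vec T) (a : R), ER_lt (Some a) (g x) ->
    exists delta, 0 < delta /\ forall y, vnorm (vsub y x) < delta -> ER_lt (Some a) (g y).
Definition is_argmin (T : finType) (g : vec T -> ER) (y : vec T) : Prop :=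
  forall u, ER_le (g y) (g u).

Definition is_C1 (T : finType) (f : vec T -> R) (grad : vec T -> vec T) : Prop :=
  (forall x eps, 0 < eps -> exists delta, 0 < delta /\ forall y,
      vnorm (vsub y x) < delta ->
      Rabs (f y - f x - inner (grad x) (vsub y x)) <= eps * vnorm (vsub y x)) /\
  (forall x eps, 0 < eps -> exists delta, 0 < delta /\ forall y,
      vnorm (vsub y x) < delta -> vnorm (vsub (grad y) (grad x)) < eps).

Definition lip_on_bounded (T : finType) (F : vec T -> vec T) : Prop :=
  forall B, exists Lb, forall x y, vnorm x <= B -> vnorm y <= B ->
    vnorm (vsub (F x) (F y)) <= Lb * vnorm (vsub x y).

Definition prox_bounded (T : finType) (g : vec T -> ER) (lam : R) : Prop :=
  forall (x : vec T) (l : R), 0 < l <= lam ->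
    exists y, is_argmin (fun y => ER_addR (g y) (/ (2 * l) * (vnorm (vsub x y)) ^ 2)) y.

Definition frechet_sub (T : finType) (g : vec T -> ER) (x v : vec T) : Prop :=
  g x <> None /\
  forall eps, 0 < eps -> exists delta, 0 < delta /\ forall y,
    vnorm (vsub y x) < delta ->
    ER_le (ER_addR (g x) (inner v (vsub y x) - eps * vnorm (vsub y x))) (g y).

Definition vconv (T : finType) (u : nat -> vec T) (x : vec T) : Prop :=
  forall eps, 0 < eps -> exists N, forall n, (N <= n)%N -> vnorm (vsub (u n) x) < eps.

Definition limiting_sub (T : finType) (g : vec T -> ER) (x v : vec T) : Prop :=
  exists (xs vs : nat -> vec T),
    vconv xs x /\ vconv vs v /\ (forall n, frechet_sub g (xs n) (vs n)) /\
    exists gx, g x = Some gx /\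
      forall eps, 0 < eps -> exists N, forall n, (N <= n)%N ->
        exists a, g (xs n) = Some a /\ Rabs (a - gx) < eps.

(** dist(0, S) <= b, i.e. inf_{s in S} ||s|| <= b (inf of the empty set = +oo). *)
Definition dist0_le (T : finType) (S : vec T -> Prop) (b : R) : Prop :=
  forall eps, 0 < eps -> exists v, S v /\ vnorm v < b + eps.

(** Block structure: H = R^I, H_j = R^{i | blk i = j}, H_{-j} = R^{i | blk i <> j}. *)
Section Blocks.
Local Unset Implicit Arguments.
Variables (m : nat) (I : finType) (blk : I -> 'I_m).

Definition blockT (j : 'I_m) : finType := {i : I | blk i == j}.
Definition cblockT (j : 'I_m) : finType := {i : I | blk i != j}.

Definition blk_of (x : vec I) (j : 'I_m) : vec (blockT j) := fun s => x (val s).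
Definition blk_rest (x : vec I) (j : 'I_m) : vec (cblockT j) := fun s => x (val s).
Definition blk_repl (x : vec I) (j : 'I_m) (y : vec (blockT j)) : vec I :=
  fun i => match (insub i : option (blockT j)) with Some s => y s | None => x i end.

Definition rfull (r : forall j : 'I_m, vec (blockT j) -> ER) (x : vec I) : ER :=
  foldr ER_add (Some 0) (map (fun j => r j (blk_of x j)) (enum 'I_m)).

Definition Psi (f : vec I -> R) (r : forall j : 'I_m, vec (blockT j) -> ER) (x : vec I) : ER :=
  ER_addR (rfull r x) (f x).

Definition block_lipschitz (grad : vec I -> vec I)
    (L : forall j : 'I_m, vec (cblockT j) -> R) : Prop :=
  forall (j : 'I_m) (x : vec I) (y y' : vec (blockT j)),
    vnorm (vsub (blk_of (grad (blk_repl x j y)) j) (blk_of (grad (blk_repl x j y')) j))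
      <= L j (blk_rest x j) * vnorm (vsub y y').

(* x^{k - d_k}, with x^i = x^0 for i <= 0 (truncated nat subtraction) *)
Definition xdel (X : nat -> vec I) (d : nat -> 'I_m -> nat) (k : nat) : vec I :=
  fun i => X (k - d k (blk i))%N i.

Definition cnt (jseq : nat -> 'I_m) (tau : nat) (j : 'I_m) (k : nat) : nat :=
  count (fun h => jseq h == j) (iota (k - tau) (k - (k - tau)).+1).

(* rho = sup_{j,k} cnt j k (a maximum, as the counts are bounded naturals) *)
Definition is_rho (jseq : nat -> 'I_m) (tau rho : nat) : Prop :=
  (forall j k, (cnt jseq tau j k <= rho)%N) /\ (exists j k, cnt jseq tau j k = rho).

Definition gamma (L : forall j : 'I_m, vec (cblockT j) -> R) (X : nat -> vec I)
    (d : nat -> 'I_m -> nat) (c M lam_r : R) (rho tau : nat) (k : nat) (j : 'I_m) : R :=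
  Rmin (c / (L j (blk_rest (xdel X d k) j) + 2 * M * sqrt (INR rho * INR tau))) lam_r.

Definition palm_step (f : vec I -> R) (grad : vec I -> vec I)
    (r : forall j : 'I_m, vec (blockT j) -> ER)
    (L : forall j : 'I_m, vec (cblockT j) -> R) (X : nat -> vec I)
    (d : nat -> 'I_m -> nat) (jseq : nat -> 'I_m) (c M lam_r : R) (rho tau : nat)
    (k : nat) : Prop :=
  let j := jseq k in
  let g := gamma L X d c M lam_r rho tau k j in
  is_argmin (fun u => ER_addR (r j u)
                (inner (blk_of (grad (xdel X d k)) j) (vsub u (blk_of (X k) j))
                 + / (2 * g) * (vnorm (vsub u (blk_of (X k) j))) ^ 2))
            (blk_of (X k.+1) j) /\
  (forall i, blk i != j -> X k.+1 i = X k i).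

Definition assumption_A1 (jseq : nat -> 'I_m) (K : nat) : Prop :=
  forall (k : nat) (j : 'I_m), exists t, (1 <= t <= K)%N /\ jseq (k + t)%N = j.

(* the Lyapunov function Phi on H^{1+tau} = R^('I_(tau+1) * I) *)
Definition zsl (tau : nat) (z : vec (('I_tau.+1 * I)%type)) (h : nat) : vec I :=
  fun i => z (inord h, i).

Definition Phi (f : vec I -> R) (r : forall j : 'I_m, vec (blockT j) -> ER)
    (M : R) (rho tau : nat) (z : vec (('I_tau.+1 * I)%type)) : ER :=
  ER_addR (rfull r (zsl tau z 0))
    (f (zsl tau z 0) +
     M * sqrt (INR rho) / (2 * sqrt (INR tau)) *
     foldr Rplus 0
       (map (fun h => INR (tau - h + 1) * (vnorm (vsub (zsl tau z h) (zsl tau z h.-1))) ^ 2)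
            (iota 1 tau))).

(* z^k = (x^k, x^{k-1}, ..., x^{k-tau}), x^i = x^0 for i < 0 *)
Definition zk (X : nat -> vec I) (tau k : nat) : vec (('I_tau.+1 * I)%type) :=
  fun p => X (k - p.1)%N p.2.

(* sum_{h = k - tau - K}^{k} ||x^{h+1} - x^h||; terms with h < 0 vanish *)
Definition Ssum (X : nat -> vec I) (tau K k : nat) : R :=
  foldr Rplus 0
    (map (fun h => vnorm (vsub (X h.+1) (X h)))
         (iota (k - tau - K) (k - (k - tau - K)).+1)).

End Blocks.

(* Main.v *)
Require Import Defs.
From HB Require Import structures.
From Stdlib Require Import Reals Lra Lia FunctionalExtensionality.
From mathcomp Require Import ssreflect ssrfun ssrbool eqtype ssrnat seq choice fintype bigop.
From mathcomp Require Import zify.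
Local Open Scope R_scope.
Set Implicit Arguments.

Lemma Rplus_assoc' : associative Rplus. Proof. move=> *; ring. Qed.
HB.instance Definition _ := Monoid.isComLaw.Build R 0 Rplus Rplus_assoc' Rplus_comm Rplus_0_l.

Lemma rsumE (T : finType) (g : T -> R) : rsum g = \big[Rplus/0]_(i : T) g i.
Proof.
rewrite /rsum -big_enum /=.
elim: (enum T) => [|a s IH]; first by rewrite big_nil.
by rewrite big_cons /= IH.
Qed.

Section BigR.
Variables (J : Type) (s : seq J) (P : pred J).
Lemma bigR_scal (a : R) (F : J -> R) :
  \big[Rplus/0]_(i <- s | P i) (a * F i) = a * \big[Rplus/0]_(i <- s | P i) F i.
Proof.
elim: s => [|x t IH]; first by rewrite !big_nil; ring.
rewrite !big_cons; case: (P x); rewrite IH //; ring.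
Qed.
Lemma bigR_add (F G : J -> R) :
  \big[Rplus/0]_(i <- s | P i) (F i + G i) =
  \big[Rplus/0]_(i <- s | P i) F i + \big[Rplus/0]_(i <- s | P i) G i.
Proof. by rewrite big_split. Qed.
Lemma bigR_le (F G : J -> R) : (forall i, P i -> F i <= G i) ->
  \big[Rplus/0]_(i <- s | P i) F i <= \big[Rplus/0]_(i <- s | P i) G i.
Proof.
move=> H; elim: s => [|x t IH]; first by rewrite !big_nil; lra.
rewrite !big_cons; case Px: (P x) => //; have := H x Px; lra.
Qed.
Lemma bigR_ge0 (F : J -> R) : (forall i, P i -> 0 <= F i) ->
  0 <= \big[Rplus/0]_(i <- s | P i) F i.
Proof.
move=> H; elim: s => [|x t IH]; first by rewrite !big_nil; lra.
rewrite !big_cons; case Px: (P x) => //; have := H x Px; lra.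
Qed.
Lemma bigR_abs (F : J -> R) :
  Rabs (\big[Rplus/0]_(i <- s | P i) F i) <= \big[Rplus/0]_(i <- s | P i) Rabs (F i).
Proof.
elim: s => [|x t IH]; first by rewrite !big_nil Rabs_R0; lra.
rewrite !big_cons; case Px: (P x) => //.
apply: Rle_trans (Rabs_triang _ _) _; lra.
Qed.
End BigR.

Lemma bigR_single (T : finType) (F : T -> R) (i0 : T) :
  (forall i, 0 <= F i) -> F i0 <= \big[Rplus/0]_(i : T) F i.
Proof.
move=> H; rewrite (bigD1 i0) //=.
have := @bigR_ge0 _ (index_enum T) (fun i => i != i0) F (fun i _ => H i); lra.
Qed.

Section Rsum.
Variable T : finType.
Implicit Types F G : T -> R.
Lemma rsum_ext F G : (forall i, F i = G i) -> rsum F = rsum G.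
Proof. by move=> H; rewrite /rsum (eq_map H). Qed.
Lemma rsum_add F G : rsum (fun i => F i + G i) = rsum F + rsum G.
Proof. by rewrite !rsumE bigR_add. Qed.
Lemma rsum_scal a F : rsum (fun i => a * F i) = a * rsum F.
Proof. by rewrite !rsumE bigR_scal. Qed.
Lemma rsum_opp F : rsum (fun i => - F i) = - rsum F.
Proof.
have -> : - rsum F = (-1) * rsum F by ring.
by rewrite -rsum_scal; apply: rsum_ext => i; ring.
Qed.
Lemma rsum_sub F G : rsum (fun i => F i - G i) = rsum F - rsum G.
Proof. by rewrite rsum_add rsum_opp. Qed.
Lemma rsum_le F G : (forall i, F i <= G i) -> rsum F <= rsum G.
Proof. by move=> H; rewrite !rsumE; apply: bigR_le => i _. Qed.
Lemma rsum_ge0 F : (forall i, 0 <= F i) -> 0 <= rsum F.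
Proof. by move=> H; rewrite !rsumE; apply: bigR_ge0 => i _. Qed.
Lemma rsum_single F i0 : (forall i, 0 <= F i) -> F i0 <= rsum F.
Proof. by move=> H; rewrite rsumE; apply: bigR_single. Qed.
Lemma rsum_abs F : Rabs (rsum F) <= rsum (fun i => Rabs (F i)).
Proof. by rewrite !rsumE; apply: bigR_abs. Qed.
Lemma rsum_const a : rsum (fun _ : T => a) = INR #|T| * a.
Proof.
rewrite /rsum cardE; elim: (enum T) => [|x t IH] /=; first by ring.
rewrite IH; case: (size t) => [|n] /=; ring.
Qed.

Lemma inner_ge0 (u : vec T) : 0 <= inner u u.
Proof. apply: rsum_ge0 => i; apply: Rle_0_sqr. Qed.
Lemma vnorm_ge0 (u : vec T) : 0 <= vnorm u.
Proof. apply: sqrt_pos. Qed.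
Lemma vnorm2 (u : vec T) : vnorm u ^ 2 = inner u u.
Proof. rewrite /vnorm /= Rmult_1_r sqrt_sqrt //; apply: inner_ge0. Qed.
Lemma coord_le_norm (u : vec T) i : Rabs (u i) <= vnorm u.
Proof.
rewrite /vnorm -sqrt_Rsqr_abs; apply: sqrt_le_1_alt.
rewrite /inner; apply: (rsum_single (fun i => u i * u i)) => j; apply: Rle_0_sqr.
Qed.
Lemma norm_le_l1 (u : vec T) : vnorm u <= rsum (fun i => Rabs (u i)).
Proof.
have H0 : 0 <= rsum (fun i => Rabs (u i)) by apply: rsum_ge0 => i; apply: Rabs_pos.
rewrite /vnorm -(sqrt_Rsqr _ H0); apply: sqrt_le_1_alt.
rewrite /inner !rsumE /Rsqr.
elim: (index_enum T) => [|x t IH]; first by rewrite !big_nil; lra.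
rewrite !big_cons.
have := @bigR_ge0 _ t predT (fun i => Rabs (u i)) (fun i _ => Rabs_pos _).
have : u x * u x = Rabs (u x) * Rabs (u x).
  by rewrite -Rabs_mult Rabs_right //; apply: Rle_ge; apply: Rle_0_sqr.
have := Rabs_pos (u x).
set A := \big[Rplus/0]_(i <- t) (u i * u i) in IH *.
set B := \big[Rplus/0]_(i <- t) Rabs (u i) in IH *.
move=> h1 h2 h3; rewrite h2; nra.
Qed.
Lemma vnorm_zero : vnorm (fun _ : T => 0) = 0.
Proof.
rewrite /vnorm /inner rsum_const; rewrite Rmult_0_r Rmult_0_r sqrt_0 //.
Qed.
End Rsum.

Lemma argmin_sub (T : finType) (rj : vec T -> ER) (g xh xp : vec T) (ga : R) :
  0 < ga -> proper_fun rj ->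
  is_argmin (fun u => ER_addR (rj u) (inner g (vsub u xh) + / (2 * ga) * vnorm (vsub u xh) ^ 2)) xp ->
  exists b, rj xp = Some b /\ forall u,
    ER_le (Some (b + inner (fun i => - g i - (xp i - xh i) / ga) (vsub u xp)
                   - / (2 * ga) * inner (vsub u xp) (vsub u xp))) (rj u).
Proof.
move=> hga [u0 hu0] Harg.
have H0 := Harg u0; move: H0; rewrite /ER_addR.
case E0: (rj u0) => [a0|] //; case Ep: (rj xp) => [b|] // _.
exists b; split => // u; have := Harg u; rewrite /ER_addR Ep.
case: (rj u) => [a|] //; rewrite !vnorm2 /= => h.
suff E : inner (fun i => - g i - (xp i - xh i) / ga) (vsub u xp)
                   - / (2 * ga) * inner (vsub u xp) (vsub u xp) =
   (inner g (vsub xp xh) + / (2 * ga) * inner (vsub xp xh) (vsub xp xh)) -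
   (inner g (vsub u xh) + / (2 * ga) * inner (vsub u xh) (vsub u xh)) by lra.
rewrite /inner -!rsum_scal -!rsum_add -!rsum_sub.
apply: rsum_ext => i; rewrite /vsub; field; lra.
Qed.

Lemma foldr_map_big (J : Type) (F : J -> R) (s : seq J) :
  foldr Rplus 0 (map F s) = \big[Rplus/0]_(x <- s) F x.
Proof. elim: s => [|a s IH] /=; by [rewrite big_nil | rewrite big_cons IH]. Qed.

Lemma big_enumT (T : finType) (F : T -> R) :
  \big[Rplus/0]_(i <- enum T) F i = \big[Rplus/0]_(i : T) F i.
Proof. by rewrite big_enum. Qed.


Search _ (\big[_/_]_(_ : _ * _) _).
Lemma big_prodT (A B : finType) (F : A * B -> R) :
  \big[Rplus/0]_(x : A * B) F x = \big[Rplus/0]_(a : A) \big[Rplus/0]_(b : B) F (a, b).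
Proof.
rewrite pair_bigA /=.
by apply: eq_bigr => -[a b].
Qed.

Lemma rsum_delta (n : nat) (T : finType) (h : nat) (F : 'I_n.+1 * T -> R) :
  (h <= n)%N ->
  rsum (fun x : 'I_n.+1 * T => (if nat_of_ord x.1 == h then 1 else 0) * F x) =
  rsum (fun i => F (inord h, i)).
Proof.
move=> hn; rewrite !rsumE big_prodT /= (bigD1 (inord h)) //= inordK ?eqxx; last by [].
rewrite [X in _ + X = _]big1 ?Rplus_0_r.
  by apply: eq_bigr => i _; rewrite Rmult_1_l.
move=> p hp; apply: big1 => i _.
case: eqP => [E|]; last by rewrite Rmult_0_l.
exfalso; move/eqP: hp; apply; apply: val_inj; rewrite /= E inordK //.
Qed.
Unset Implicit Arguments.

Lemma inner_add (T : finType) (u v w : vec T) :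
  inner (fun i => u i + v i) w = inner u w + inner v w.
Proof. rewrite /inner -rsum_add; apply: rsum_ext => i; ring. Qed.

Lemma psi_frechet (T : finType) (R0 : vec T -> ER) (F : vec T -> R) (gF : vec T -> vec T)
  (x s : vec T) (Cq rx : R) :
  is_C1 F gF -> 0 <= Cq -> R0 x = Some rx ->
  (forall y, ER_le (Some (rx + inner s (vsub y x) - Cq * inner (vsub y x) (vsub y x))) (R0 y)) ->
  frechet_sub (fun y => ER_addR (R0 y) (F y)) x (fun i => gF x i + s i).
Proof.
move=> [HF _] hC Hx Hy; split; first by rewrite Hx.
move=> eps heps.
have [df [hdf Hdf]] := HF x (eps / 2) ltac:(lra).
exists (Rmin df (eps / (2 * (Cq + 1)))); split.
  apply: Rmin_pos => //; apply: Rdiv_lt_0_compat => //; lra.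
move=> y hy; have := Hy y; rewrite Hx /=.
case: (R0 y) => [ry|] //= h1.
have hy1 : vnorm (vsub y x) < df by apply: Rlt_le_trans hy (Rmin_l _ _).
have hy2 : vnorm (vsub y x) < eps / (2 * (Cq + 1)) by apply: Rlt_le_trans hy (Rmin_r _ _).
have h2 := Hdf y hy1.
rewrite inner_add.
have h0 := vnorm_ge0 (vsub y x).
rewrite -(vnorm2 (vsub y x)) in h1.
set e := vnorm (vsub y x) in h0 h1 h2 hy1 hy2 *.
have h3 : Cq * e ^ 2 <= eps / 2 * e.
  have : Cq * e <= eps / 2.
    have : e * (2 * (Cq + 1)) < eps.
      by move: hy2; rewrite /Rdiv => hh; apply: (Rmult_lt_reg_r (/ (2 * (Cq + 1)))); [apply: Rinv_0_lt_compat; lra | rewrite Rmult_assoc Rinv_r; [lra|lra]].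
    nra.
  nra.
move: h2; set a := inner (gF x) (vsub y x) => h2.
have h4 := Rle_abs (-(F y - F x - a)); rewrite Rabs_Ropp in h4.
lra.
Qed.

Lemma frechet_add_smooth (T : finType) (g : vec T -> ER) (h : vec T -> R) (x v w : vec T) :
  frechet_sub g x v -> (forall y, h x + inner w (vsub y x) <= h y) ->
  frechet_sub (fun y => ER_addR (g y) (h y)) x (fun i => v i + w i).
Proof.
move=> [Hx Hf] Hh; split; first by move: Hx; rewrite /ER_addR; case: (g x).
move=> eps heps; have [dl [hdl Hdl]] := Hf eps heps; exists dl; split => // y hy.
have := Hdl y hy; have := Hh y; rewrite inner_add.
case: (g x) => [gx|] //=; case: (g y) => [gy|] //=; lra.
Qed.

Lemma frechet_proj (I : finType) (n : nat) (g : vec I -> ER) (z : vec ('I_n.+1 * I)%type) (v : vec I) :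
  frechet_sub g (zsl I n z 0) v ->
  frechet_sub (fun y => g (zsl I n y 0)) z
     (fun p => (if nat_of_ord p.1 == 0%N then 1 else 0) * v p.2).
Proof.
move=> [Hx Hf]; split => // eps heps; have [dl [hdl Hdl]] := Hf eps heps; exists dl; split => // y hy.
have Hn : vnorm (vsub (zsl I n y 0) (zsl I n z 0)) <= vnorm (vsub y z).
  rewrite /vnorm; apply: sqrt_le_1_alt.
  have -> : inner (vsub (zsl I n y 0) (zsl I n z 0)) (vsub (zsl I n y 0) (zsl I n z 0)) =
     rsum (fun x : ('I_n.+1 * I)%type => (if nat_of_ord x.1 == 0%N then 1 else 0) * (vsub y z x * vsub y z x)).
    by rewrite rsum_delta.
  apply: rsum_le => -[p i] /=; have := Rle_0_sqr (vsub y z (p, i)); rewrite /Rsqr; case: (_ == _) => ?; nra.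
have Hi : inner (fun p : ('I_n.+1 * I)%type => (if nat_of_ord p.1 == 0%N then 1 else 0) * v p.2) (vsub y z) =
          inner v (vsub (zsl I n y 0) (zsl I n z 0)).
  rewrite /inner -(@rsum_delta n I 0 (fun x => v x.2 * vsub y z x)) //.
  by apply: rsum_ext => -[p i] /=; ring.
have := Hdl _ (Rle_lt_trans _ _ _ Hn hy); rewrite Hi.
case: (g (zsl I n z 0)) => [gx|] //=; case: (g _) => [gy|] //=.
have := vnorm_ge0 (vsub y z); nra.
Qed.

Lemma frechet_limiting (T : finType) (g : vec T -> ER) (x v : vec T) :
  frechet_sub g x v -> limiting_sub g x v.
Proof.
move=> Hf; exists (fun _ => x), (fun _ => v).
have Hc : forall u : vec T, vconv (fun _ => u) u.
  move=> u eps he; exists 0%N => n _.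
  have -> : vsub u u = (fun _ => 0) by apply: functional_extensionality => i; rewrite /vsub; ring.
  by rewrite vnorm_zero.
split; first exact: Hc. split; first exact: Hc. split; first by [].
case: Hf; case: (g x) => [gx|] // _ _; exists gx; split => // eps he; exists 0%N => n _.
exists gx; split => //; rewrite Rminus_diag_eq // Rabs_R0 //.
Qed.

Lemma dist0_of (T : finType) (S : vec T -> Prop) (v : vec T) (b : R) :
  S v -> vnorm v <= b -> dist0_le S b.
Proof. move=> Sv hb eps he; exists v; split => //; lra. Qed.

Lemma foldr_ER_lb (J : Type) (s : seq J) (F : J -> ER) (A : J -> R) :
  (forall j, ER_le (Some (A j)) (F j)) ->
  ER_le (Some (\big[Rplus/0]_(j <- s) A j)) (foldr ER_add (Some 0) (map F s)).
Proof.
move=> H; elim: s => [|a s IH] /=; first by rewrite big_nil /=; lra.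
rewrite big_cons; have := H a; case: (F a) => [fa|] //=.
move: IH; case: (foldr _ _ _) => [q|] //=; lra.
Qed.

Lemma foldr_ER_val (J : Type) (s : seq J) (F : J -> ER) (b : J -> R) :
  (forall j, F j = Some (b j)) ->
  foldr ER_add (Some 0) (map F s) = Some (\big[Rplus/0]_(j <- s) b j).
Proof.
move=> H; elim: s => [|a s IH] /=; first by rewrite big_nil.
by rewrite big_cons H IH.
Qed.

Lemma rfull_lb m (I : finType) blk r (y : vec I) (A : 'I_m -> R) :
  (forall j, ER_le (Some (A j)) (r j (blk_of m I blk y j))) ->
  ER_le (Some (\big[Rplus/0]_(j : 'I_m) A j)) (rfull m I blk r y).
Proof. by move=> H; rewrite -big_enumT; apply: foldr_ER_lb. Qed.

Lemma rfull_val m (I : finType) blk r (x : vec I) (b : 'I_m -> R) :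
  (forall j, r j (blk_of m I blk x j) = Some (b j)) ->
  rfull m I blk r x = Some (\big[Rplus/0]_(j : 'I_m) b j).
Proof. by move=> H; rewrite -big_enumT; apply: foldr_ER_val. Qed.

Lemma rsum_big (T : finType) (J : Type) (s : seq J) (F : J -> T -> R) :
  rsum (fun x => \big[Rplus/0]_(h <- s) F h x) = \big[Rplus/0]_(h <- s) rsum (F h).
Proof.
rewrite rsumE exchange_big /=; apply: eq_bigr => h _; by rewrite rsumE.
Qed.

Lemma bigR_mulr (J : Type) (s : seq J) (F : J -> R) (a : R) :
  (\big[Rplus/0]_(h <- s) F h) * a = \big[Rplus/0]_(h <- s) (F h * a).
Proof.
rewrite Rmult_comm -bigR_scal; apply: eq_bigr => h _; ring.
Qed.

Definition dlt {n : nat} (p : 'I_n.+1) (h : nat) : R := if nat_of_ord p == h then 1 else 0.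

Lemma quad_grad (I : finType) (n : nat) (kap : R) (w : nat -> R) (z : vec ('I_n.+1 * I)%type) :
  0 <= kap -> (forall h, 0 <= w h) ->
  forall y,
  kap * foldr Rplus 0 (map (fun h => w h * vnorm (vsub (zsl I n z h) (zsl I n z h.-1)) ^ 2) (iota 1 n))
  + inner (fun p : ('I_n.+1 * I)%type => kap * \big[Rplus/0]_(h <- iota 1 n)
        (w h * 2 * (zsl I n z h p.2 - zsl I n z h.-1 p.2) * (dlt p.1 h - dlt p.1 h.-1)))
     (vsub y z)
  <= kap * foldr Rplus 0 (map (fun h => w h * vnorm (vsub (zsl I n y h) (zsl I n y h.-1)) ^ 2) (iota 1 n)).
Proof.
move=> hk hw y.
set e := vsub y z.
set a := fun h => vsub (zsl I n z h) (zsl I n z h.-1).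
set b := fun h => vsub (zsl I n e h) (zsl I n e h.-1).
have Ei : inner (fun p : ('I_n.+1 * I)%type => kap * \big[Rplus/0]_(h <- iota 1 n)
        (w h * 2 * (zsl I n z h p.2 - zsl I n z h.-1 p.2) * (dlt p.1 h - dlt p.1 h.-1))) e
   = kap * \big[Rplus/0]_(h <- iota 1 n) (w h * 2 * inner (a h) (b h)).
  rewrite /inner (@rsum_ext _ _ (fun x => kap * \big[Rplus/0]_(h <- iota 1 n)
     (w h * 2 * (zsl I n z h x.2 - zsl I n z h.-1 x.2) * (dlt x.1 h - dlt x.1 h.-1) * e x))).
    2: by move=> x; rewrite Rmult_assoc bigR_mulr.
  rewrite rsum_scal rsum_big; congr (kap * _).
  rewrite big_seq_cond [in RHS]big_seq_cond; apply: eq_bigr => h.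
  rewrite andbT mem_iota => /andP [h1 h2].
  have hn : (h <= n)%N by rewrite add1n ltnS in h2.
  have hn' : (h.-1 <= n)%N by apply: leq_trans (leq_pred h) hn.
  rewrite (@rsum_ext _ _ (fun x => dlt x.1 h * (w h * 2 * a h x.2 * e x)
                                 - dlt x.1 h.-1 * (w h * 2 * a h x.2 * e x))).
    2: by move=> x; rewrite /a /vsub; ring.
  rewrite rsum_sub /dlt !rsum_delta // -rsum_sub -rsum_scal.
  by apply: rsum_ext => i /=; rewrite /b /e /zsl /vsub; ring.
have Eq : forall h, vnorm (vsub (zsl I n y h) (zsl I n y h.-1)) ^ 2 =
    vnorm (a h) ^ 2 + 2 * inner (a h) (b h) + inner (b h) (b h).
  move=> h; rewrite !vnorm2 /inner -!rsum_scal -!rsum_add; apply: rsum_ext => i.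
  rewrite /a /b /e /zsl /vsub; ring.
rewrite Ei !foldr_map_big.
rewrite -Rmult_plus_distr_l; apply: Rmult_le_compat_l => //.
rewrite -bigR_add; apply: bigR_le => h _.
rewrite Eq; change (vsub (zsl I n z h) (zsl I n z h.-1)) with (a h); have := hw h; have := inner_ge0 (b h); nra.
Qed.

Lemma tele_gen (I : finType) (X : nat -> vec I) (i : I) t n :
  Rabs (X (t + n)%N i - X t i) <=
  \big[Rplus/0]_(t <= s < t + n) vnorm (vsub (X s.+1) (X s)).
Proof.
elim: n => [|n IH].
  rewrite addn0 big_geq // Rminus_diag_eq // Rabs_R0; lra.
rewrite addnS big_nat_recr /=; last by rewrite leq_addr.
have h1 : Rabs (X (t + n)%N.+1 i - X (t + n)%N i) <= vnorm (vsub (X (t + n)%N.+1) (X (t + n)%N)) :=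
  coord_le_norm (vsub (X (t + n)%N.+1) (X (t + n)%N)) i.
have := Rabs_triang (X (t + n)%N.+1 i - X (t + n)%N i) (X (t + n)%N i - X t i).
have -> : X (t + n)%N.+1 i - X (t + n)%N i + (X (t + n)%N i - X t i) = X (t + n)%N.+1 i - X t i by ring.
lra.
Qed.

Lemma Ssum_tele (I : finType) (X : nat -> vec I) (tau K k t : nat) (i : I) :
  (k - tau - K <= t <= k.+1)%N ->
  Rabs (X k.+1 i - X t i) <= Ssum I X tau K k.
Proof.
move=> /andP [h1 h2].
have E : Ssum I X tau K k =
   \big[Rplus/0]_(k - tau - K <= s < k.+1) vnorm (vsub (X s.+1) (X s)).
  rewrite /Ssum foldr_map_big /index_iota; congr (\big[_/_]_(_ <- iota _ _) _).
  rewrite subSn //; apply: leq_trans (leq_subr _ _) (leq_subr _ _).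
rewrite E (big_cat_nat h1 h2) /=.
have := tele_gen _ X i t (k.+1 - t)%N; rewrite subnKC //.
have := @bigR_ge0 _ (index_iota (k - tau - K) t) (fun _ => true) (fun s => vnorm (vsub (X s.+1) (X s))) (fun s _ => vnorm_ge0 _).
lra.
Qed.

Lemma Ssum_ge0 (I : finType) (X : nat -> vec I) (tau K k : nat) : 0 <= Ssum I X tau K k.
Proof.
rewrite /Ssum foldr_map_big; apply: bigR_ge0 => s _; apply: vnorm_ge0.
Qed.

Lemma bigR_bound (J : eqType) (s : seq J) (F : J -> R) (C : R) :
  (forall h, h \in s -> F h <= C) -> \big[Rplus/0]_(h <- s) F h <= INR (size s) * C.
Proof.
elim: s => [|a s IH] H; first by rewrite big_nil /=; lra.
rewrite big_cons /= -/(INR (S (size s))) S_INR.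
have := H a (mem_head _ _); have := IH (fun h hs => H h (mem_behead (s := a :: s) hs)); lra.
Qed.

Lemma rsum_blocks (m : nat) (I : finType) (blk : I -> 'I_m) (g : vec I) :
  \big[Rplus/0]_(j : 'I_m) rsum (fun t : blockT m I blk j => g (val t)) = rsum g.
Proof.
rewrite rsumE (partition_big blk predT) //=.
apply: eq_bigr => j _; rewrite rsumE.
by rewrite -(big_sub (fun i => blk i == j)).
Qed.

Lemma bigR_split3 (J : Type) (s : seq J) (A B C : J -> R) :
  \big[Rplus/0]_(j <- s) (A j + B j - C j) =
  \big[Rplus/0]_(j <- s) A j + \big[Rplus/0]_(j <- s) B j - \big[Rplus/0]_(j <- s) C j.
Proof.
elim: s => [|a s IH]; first by rewrite !big_nil; ring.
rewrite !big_cons IH; ring.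
Qed.

Lemma Rabs_sub_le (a b : R) : Rabs (a - b) <= Rabs a + Rabs b.
Proof. apply: Rle_trans (Rabs_triang a (- b)) _; rewrite Rabs_Ropp; lra. Qed.

Unset Implicit Arguments.

Lemma ineq3 (a b q1 q2 : R) : q1 <= q2 -> a + b - q2 <= a + b - q1.
Proof. lra. Qed.

Lemma ER_le_weaken (a a' : R) (v : ER) : a' <= a -> ER_le (Some a) v -> ER_le (Some a') v.
Proof. case: v => //= b; lra. Qed.

Theorem mainTheorem7
  (m : nat) (I : finType) (blk : I -> 'I_m)
  (f : vec I -> R) (grad : vec I -> vec I)
  (r : forall j : 'I_m, vec (blockT m I blk j) -> ER)
  (lam_r : R)
  (L : forall j : 'I_m, vec (cblockT m I blk j) -> R)
  (tau : nat) (d : nat -> 'I_m -> nat)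
  (X : nat -> vec I) (c M : R) (jseq : nat -> 'I_m) (rho K : nat)
  (* standing assumptions *)
  (Hf : is_C1 f grad)
  (Hr : forall j : 'I_m, proper_fun (r j) /\ lsc (r j))
  (Hbelow : exists b : R, forall x : vec I, ER_le (Some b) (Psi m I blk f r x))
  (Hlam : 0 < lam_r)
  (Hprox : prox_bounded (rfull m I blk r) lam_r)
  (HLpos : forall (j : 'I_m) (w : vec (cblockT m I blk j)), 0 < L j w)
  (HLip : block_lipschitz m I blk grad L)
  (HgradLip : lip_on_bounded grad)
  (* delays *)
  (Htau : (1 <= tau)%N)
  (Hd : forall (k : nat) (j : 'I_m), (d k j <= tau)%N)
  (* algorithm *)
  (Hc : 0 < c < 1) (HM : 0 < M)
  (Hrho : is_rho m jseq tau rho)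
  (Hiter : forall k : nat, palm_step m I blk f grad r L X d jseq c M lam_r rho tau k)
  (* (A1) *)
  (HA1 : assumption_A1 m jseq K)
  (* (A2) *)
  (HA2 : exists Lb : R, 0 < Lb /\
     forall (j : 'I_m) (k : nat), L j (blk_rest m I blk (xdel m I blk X d k) j) <= Lb)
  (* (A3) *)
  (HA3 : forall k : nat,
     vnorm (vsub (blk_of m I blk (grad (X k)) (jseq k))
                 (blk_of m I blk (grad (xdel m I blk X d k)) (jseq k)))
       <= M * vnorm (vsub (X k) (xdel m I blk X d k)))
  (* boundedness *)
  (Hbdd : exists B : R, forall k : nat, vnorm (X k) <= B) :
  exists c0 : R, 0 < c0 /\ exists k' : nat, forall k : nat, (k' <= k)%N ->
    dist0_le (limiting_sub (Phi m I blk f r M rho tau) (zk I X tau k.+1))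
             (c0 * Ssum I X tau K k) /\
    dist0_le (limiting_sub (Psi m I blk f r) (X k.+1))
             (c0 * Ssum I X tau K k).
Proof.
have [B HB] := Hbdd.
have [LA [hLA HA2']] := HA2.
set nI := INR #|I|.
have hnI : 0 <= nI by apply: pos_INR.
have hB : 0 <= B by have := HB 0%N; have := vnorm_ge0 (X 0%N); lra.
have [Lg HLg] := HgradLip (nI * B).
set Lg' := Rabs Lg.
have hLg' : 0 <= Lg' by apply: Rabs_pos.
have Hmix : forall u : vec I, (forall i, exists t, u i = X t i) -> vnorm u <= nI * B.
  move=> u Hu; apply: Rle_trans (norm_le_l1 u) _.
  rewrite /nI -rsum_const; apply: rsum_le => i.
  have [t ->] := Hu i; apply: Rle_trans (coord_le_norm _ i) (HB t).
have HgL : forall a b : vec I, (forall i, exists t, a i = X t i) -> (forall i, exists t, b i = X t i) ->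
   vnorm (vsub (grad a) (grad b)) <= Lg' * vnorm (vsub a b).
  move=> a b ha hb; apply: Rle_trans (HLg a b (Hmix a ha) (Hmix b hb)) _.
  apply: Rmult_le_compat_r; [apply: vnorm_ge0 | apply: Rle_abs].
set Ginv := (LA + 2 * M * sqrt (INR rho * INR tau)) / c + / lam_r.
have hsq := sqrt_pos (INR rho * INR tau).
have hGinv : 0 <= Ginv.
  rewrite /Ginv; have := Rinv_0_lt_compat _ Hlam.
  have : 0 <= (LA + 2 * M * sqrt (INR rho * INR tau)) / c.
    apply: Rmult_le_pos; [nra | apply: Rlt_le; apply: Rinv_0_lt_compat; lra].
  lra.
have Hgam : forall h j, 0 < gamma m I blk L X d c M lam_r rho tau h j /\
                        / gamma m I blk L X d c M lam_r rho tau h j <= Ginv.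
  move=> h j; rewrite /gamma.
  have hL := HLpos j (blk_rest m I blk (xdel m I blk X d h) j).
  have hL2 := HA2' j h.
  set Lv := L j (blk_rest m I blk (xdel m I blk X d h) j) in hL hL2 *.
  have hA : 0 < Lv + 2 * M * sqrt (INR rho * INR tau) by nra.
  have hp : 0 < c / (Lv + 2 * M * sqrt (INR rho * INR tau)) by apply: Rdiv_lt_0_compat; lra.
  split; first by apply: Rmin_pos.
  rewrite /Rmin; case: Rle_dec => _.
    rewrite Rinv_div /Ginv.
    have : (Lv + 2 * M * sqrt (INR rho * INR tau)) / c <= (LA + 2 * M * sqrt (INR rho * INR tau)) / c.
      apply: Rmult_le_compat_r; [ apply: Rlt_le; apply: Rinv_0_lt_compat; lra | lra].
    have := Rinv_0_lt_compat _ Hlam; lra.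
  rewrite /Ginv; have : 0 <= (LA + 2 * M * sqrt (INR rho * INR tau)) / c.
    apply: Rmult_le_pos; [nra | apply: Rlt_le; apply: Rinv_0_lt_compat; lra].
  lra.
set C1 := Lg' * nI + 2 * Ginv.
have hC1 : 0 <= C1 by rewrite /C1; nra.
have htau0 : 0 < INR tau by apply: lt_0_INR; apply/ltP.
set kap := M * sqrt (INR rho) / (2 * sqrt (INR tau)).
have hkap : 0 <= kap.
  rewrite /kap; apply: Rmult_le_pos.
    by apply: Rmult_le_pos; [lra | apply: sqrt_pos].
  apply: Rlt_le; apply: Rinv_0_lt_compat; have := sqrt_lt_R0 _ htau0; lra.
set C2 := INR #|{: ('I_tau.+1 * I)%type}| * (kap * (INR tau * (INR tau.+1 * 4))).
have hC2 : 0 <= C2.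
  rewrite /C2; apply: Rmult_le_pos; first by apply: pos_INR.
  apply: Rmult_le_pos => //; apply: Rmult_le_pos; first by apply: pos_INR.
  have := pos_INR tau.+1; lra.
exists (nI * C1 + C2 + 1); split; first by nra.
exists (tau + K + 1)%N => k hk.
set S := Ssum I X tau K k.
have hS : 0 <= S by apply: Ssum_ge0.
have HH : forall j : 'I_m, {h | jseq h = j /\ (k - K < h <= k)%N /\ forall t, (h < t <= k)%N -> jseq t <> j}.
  move=> j.
  pose P := fun h => (jseq h == j) && (h <= k)%N.
  have exP : exists h, P h.
    have [t [/andP [t1 t2] Ht]] := HA1 (k - K)%N j.
    exists (k - K + t)%N; rewrite /P Ht eqxx /=; lia.
  have ubP : forall h, P h -> (h <= k)%N by move=> h /andP [].
  exists (ex_maxn exP ubP).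
  have [t [/andP [t1 t2] Ht]] := HA1 (k - K)%N j.
  case: ex_maxnP => h /andP [/eqP hj hk'] hmax.
  split => //; split.
    have : (k - K + t <= h)%N by apply: hmax; rewrite /P Ht eqxx /=; lia.
    lia.
  move=> t' /andP [ht1 ht2] E; have := hmax t'; rewrite /P E eqxx ht2 /= => /(_ isT); lia.
pose hh := fun j => sval (HH j).
have Hhh : forall j, jseq (hh j) = j /\ (k - K < hh j <= k)%N /\ forall t, (hh j < t <= k)%N -> jseq t <> j := fun j => svalP (HH j).
have Hfix : forall i, X k.+1 i = X (hh (blk i)).+1 i.
  move=> i; have [hj [/andP [l1 l2] hn]] := Hhh (blk i).
  suff : forall n, (hh (blk i) + n <= k)%N -> X (hh (blk i) + n).+1 i = X (hh (blk i)).+1 i.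
    by move=> /(_ (k - hh (blk i))%N); rewrite subnKC //; apply.
  elim=> [|n IH] hn'; first by rewrite addn0.
  rewrite addnS; have := Hiter (hh (blk i) + n).+1; rewrite /palm_step /= => -[_ Hst].
  rewrite Hst; first by apply: IH; lia.
  apply/eqP => E; apply: (hn (hh (blk i) + n).+1); first by lia.
  by rewrite -E.
set x := X k.+1.
pose gm := fun j => gamma m I blk L X d c M lam_r rho tau (hh j) j.
pose xp := fun j => blk_of m I blk x j.
have Hxp : forall j, blk_of m I blk (X (hh j).+1) j = xp j.
  move=> j; apply: functional_extensionality => t.
  by rewrite /xp /blk_of /x Hfix (eqP (valP t)).
pose Sj := fun j (t : blockT m I blk j) =>
   - blk_of m I blk (grad (xdel m I blk X d (hh j))) j t
   - (blk_of m I blk (X (hh j).+1) j t - blk_of m I blk (X (hh j)) j t) / gm j.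
have Hblock : forall j, exists b, r j (xp j) = Some b /\ forall u,
    ER_le (Some (b + inner (Sj j) (vsub u (xp j))
                   - / (2 * gm j) * inner (vsub u (xp j)) (vsub u (xp j)))) (r j u).
  move=> j; have [hj _] := Hhh j.
  have := Hiter (hh j); rewrite /palm_step => -[Harg _].
  rewrite hj in Harg.
  have := argmin_sub _ _ (Hgam (hh j) j).1 (Hr j).1 Harg.
  move=> [b [E H]]; exists b; split; first by rewrite -Hxp. by move=> u; rewrite -Hxp; exact: H.
pose bb := fun j => match r j (xp j) with Some b => b | None => 0 end.
have Hbb : forall j, r j (xp j) = Some (bb j).
  by move=> j; have [b [E _]] := Hblock j; rewrite /bb E.
have Hbl : forall j u, ER_le (Some (bb j + inner (Sj j) (vsub u (xp j))
                   - / (2 * gm j) * inner (vsub u (xp j)) (vsub u (xp j)))) (r j u).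
  by move=> j u; have [b [E H]] := Hblock j; rewrite /bb E; apply: H.
pose s := fun i => - grad (xdel m I blk X d (hh (blk i))) i
   - (X (hh (blk i)).+1 i - X (hh (blk i)) i) / gm (blk i).
set rx := \big[Rplus/0]_(j : 'I_m) bb j.
have Hrx : rfull m I blk r x = Some rx by apply: rfull_val.
have HR0 : forall y, ER_le (Some (rx + inner s (vsub y x) - Ginv / 2 * inner (vsub y x) (vsub y x)))
                      (rfull m I blk r y).
  move=> y; apply: (ER_le_weaken _ _ _ _ (rfull_lb m I blk r y (fun j => bb j + inner (Sj j) (vsub (blk_of m I blk y j) (xp j))
                   - / (2 * gm j) * inner (vsub (blk_of m I blk y j) (xp j)) (vsub (blk_of m I blk y j) (xp j)))
      (fun j => Hbl j (blk_of m I blk y j)))).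
  have E1 : inner s (vsub y x) = \big[Rplus/0]_(j : 'I_m)
      inner (Sj j) (vsub (blk_of m I blk y j) (xp j)).
    rewrite /inner -(rsum_blocks m I blk); apply: eq_bigr => j _; apply: rsum_ext => t.
    by rewrite /Sj /s /xp /blk_of /vsub (eqP (valP t)).
  have E2 : inner (vsub y x) (vsub y x) = \big[Rplus/0]_(j : 'I_m)
      inner (vsub (blk_of m I blk y j) (xp j)) (vsub (blk_of m I blk y j) (xp j)).
    rewrite /inner -(rsum_blocks m I blk); apply: eq_bigr => j _; apply: rsum_ext => t.
    by rewrite /xp /blk_of /vsub.
  rewrite E1 E2 /rx -bigR_scal bigR_split3.
  apply: ineq3.
  apply: bigR_le => j _; apply: Rmult_le_compat_r; first by apply: inner_ge0.
  have [g1 g2] := Hgam (hh j) j; rewrite Rinv_mult /gm; lra.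
have Fpsi := psi_frechet I (rfull m I blk r) f grad x s (Ginv / 2) rx Hf ltac:(lra) Hrx HR0.
pose v := fun i => grad x i + s i.
have Hv : forall i, Rabs (v i) <= C1 * S.
  move=> i; rewrite /v /s.
  set h := hh (blk i).
  have [_ [/andP [l1 l2] _]] := Hhh (blk i).
  have [g1 g2] := Hgam h (blk i).
  have -> : grad x i + (- grad (xdel m I blk X d h) i - (X h.+1 i - X h i) / gm (blk i)) =
            (grad x i - grad (xdel m I blk X d h) i) - (X h.+1 i - X h i) * / gm (blk i) by rewrite /Rdiv; ring.
  apply: Rle_trans (Rabs_sub_le _ _) _.
  have e1 : Rabs (grad x i - grad (xdel m I blk X d h) i) <= Lg' * nI * S.
    have := coord_le_norm (vsub (grad x) (grad (xdel m I blk X d h))) i; rewrite {1}/vsub => h1.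
    apply: Rle_trans h1 _.
    apply: Rle_trans (HgL _ _ _ _) _.
    - by move=> i'; exists k.+1.
    - by move=> i'; exists (h - d h (blk i'))%N.
    rewrite Rmult_assoc; apply: Rmult_le_compat_l => //.
    apply: Rle_trans (norm_le_l1 _) _.
    rewrite /nI -rsum_const; apply: rsum_le => i'.
    apply: Ssum_tele; have := Hd h (blk i'); lia.
  have e2 : Rabs ((X h.+1 i - X h i) * / gm (blk i)) <= 2 * Ginv * S.
    rewrite Rabs_mult (Rabs_right (/ _)); last by apply: Rle_ge; apply: Rlt_le; apply: Rinv_0_lt_compat.
    have t1 : Rabs (X k.+1 i - X h.+1 i) <= S by apply: Ssum_tele; lia.
    have t2 : Rabs (X k.+1 i - X h i) <= S by apply: Ssum_tele; lia.
    have t3 : Rabs (X h.+1 i - X h i) <= 2 * S.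
      have -> : X h.+1 i - X h i = (X k.+1 i - X h i) - (X k.+1 i - X h.+1 i) by ring.
      apply: Rle_trans (Rabs_sub_le _ _) _; lra.
    have := Rabs_pos (X h.+1 i - X h i).
    have : 0 <= / gm (blk i) by apply: Rlt_le; apply: Rinv_0_lt_compat.
    move: g2; rewrite -/(gm (blk i)) => g2.
    nra.
  rewrite /C1; nra.
have Hvn : vnorm v <= nI * C1 * S.
  apply: Rle_trans (norm_le_l1 _) _.
  rewrite Rmult_assoc /nI -rsum_const; apply: rsum_le => i; exact: Hv i.
split; last first.
  apply: (dist0_of _ _ v); first exact: frechet_limiting.
  nra.
pose z := zk I X tau k.+1.
have Hz0 : zsl I tau z 0 = x.
  apply: functional_extensionality => i; rewrite /zsl /z /zk /= inordK // subn0 //.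
pose w := fun h : nat => INR (tau - h + 1).
pose Qf := fun y : vec ('I_tau.+1 * I)%type => kap * foldr Rplus 0
  (map (fun h => w h * vnorm (vsub (zsl I tau y h) (zsl I tau y h.-1)) ^ 2) (iota 1 tau)).
have EPhi : Phi m I blk f r M rho tau = fun y => ER_addR (Psi m I blk f r (zsl I tau y 0)) (Qf y).
  apply: functional_extensionality => y; rewrite /Phi /Psi /Qf /kap /w.
  case: (rfull m I blk r (zsl I tau y 0)) => //= a; f_equal; ring.
have Fp : frechet_sub (Psi m I blk f r) (zsl I tau z 0) v by rewrite Hz0; exact: Fpsi.
have Fq := quad_grad I tau kap w z hkap (fun h => pos_INR _).
have Fphi := frechet_add_smooth _ _ Qf z _ _ (frechet_proj I tau _ z v Fp) Fq.
rewrite EPhi; apply: (dist0_of _ _ _ _ (frechet_limiting _ _ _ _ Fphi)).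
set C2' := kap * (INR tau * (INR tau.+1 * 4)).
have HG : forall p : ('I_tau.+1 * I)%type, Rabs (kap * \big[Rplus/0]_(h <- iota 1 tau)
        (w h * 2 * (zsl I tau z h p.2 - zsl I tau z h.-1 p.2) * (dlt p.1 h - dlt p.1 h.-1))) <= C2' * S.
  move=> p; rewrite Rabs_mult (Rabs_right kap); last by apply: Rle_ge.
  suff HS : Rabs (\big[Rplus/0]_(h <- iota 1 tau)
        (w h * 2 * (zsl I tau z h p.2 - zsl I tau z h.-1 p.2) * (dlt p.1 h - dlt p.1 h.-1)))
        <= INR (size (iota 1 tau)) * (INR tau.+1 * 4 * S).
    apply: Rle_trans (Rmult_le_compat_l _ _ _ hkap HS) _; rewrite size_iota /C2'; right; ring.
  apply: Rle_trans (bigR_abs _ (fun _ => true) _) _.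
  apply: bigR_bound => h; rewrite mem_iota => /andP [h1 h2].
  have hn : (h <= tau)%N by rewrite add1n ltnS in h2.
  have hw1 : w h <= INR tau.+1 by rewrite /w; apply: le_INR; apply/leP; lia.
  have hw0 : 0 <= w h by apply: pos_INR.
  have ha : Rabs (zsl I tau z h p.2 - zsl I tau z h.-1 p.2) <= 2 * S.
    rewrite /zsl /z /zk /= !inordK; [| lia | lia].
    have t1 : Rabs (X k.+1 p.2 - X (k.+1 - h)%N p.2) <= S by apply: Ssum_tele; lia.
    have t2 : Rabs (X k.+1 p.2 - X (k.+1 - h.-1)%N p.2) <= S by apply: Ssum_tele; lia.
    have -> : X (k.+1 - h)%N p.2 - X (k.+1 - h.-1)%N p.2 =
       (X k.+1 p.2 - X (k.+1 - h.-1)%N p.2) - (X k.+1 p.2 - X (k.+1 - h)%N p.2) by ring.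
    apply: Rle_trans (Rabs_sub_le _ _) _; lra.
  have hd : Rabs (dlt p.1 h - dlt p.1 h.-1) <= 1.
    apply: Rabs_le; rewrite /dlt; case: (_ == h); case: (_ == h.-1); lra.
  rewrite !Rabs_mult (Rabs_right (w h)); last by apply: Rle_ge.
  rewrite (Rabs_right 2); last by lra.
  have := Rabs_pos (zsl I tau z h p.2 - zsl I tau z h.-1 p.2).
  have := Rabs_pos (dlt p.1 h - dlt p.1 h.-1).
  set A := Rabs (zsl I tau z h p.2 - zsl I tau z h.-1 p.2) in ha *.
  set D := Rabs (dlt p.1 h - dlt p.1 h.-1) in hd *.
  move=> hD hA.
  have e0 : 0 <= w h * 2 * A by apply: Rmult_le_pos; lra.
  have e1 : w h * 2 * A * D <= w h * 2 * A by nra.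
  have e2 : w h * 2 * A <= w h * 2 * (2 * S) by nra.
  have e3 : w h * 2 * (2 * S) <= INR tau.+1 * 4 * S by nra.
  lra.
apply: Rle_trans (norm_le_l1 _) _.
apply: Rle_trans (@rsum_le _ _ (fun p : ('I_tau.+1 * I)%type =>
   (if nat_of_ord p.1 == 0%N then 1 else 0) * Rabs (v p.2) + C2' * S) _) _.
  move=> p; apply: Rle_trans (Rabs_triang _ _) _; apply: Rplus_le_compat; last exact: HG.
  rewrite Rabs_mult; case: (_ == _); rewrite ?Rabs_R1 ?Rabs_R0; apply: Rle_refl.
rewrite rsum_add rsum_delta // rsum_const /=.
have : rsum (fun i => Rabs (v i)) <= nI * C1 * S.
  rewrite Rmult_assoc /nI -rsum_const; apply: rsum_le => i; exact: Hv i.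
have -> : INR #|{: ('I_tau.+1 * I)%type}| * (C2' * S) = C2 * S by rewrite /C2 Rmult_assoc. move=> hh1; have := Rmult_le_pos _ _ hC2 hS; nra.
Qed.
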